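(* Let $A$ generate a strongly continuous semigroup on a Banach space $X$ and let $\alpha\in\mathbb{R}$. Assume that for every $x\in\operatorname{Dom}(A)$ there is a constant $c_x$ with $\|e^{At}x\|_{\operatorname{Dom}(A)}\le c_xe^{\alpha t}$ for all $t\ge0$. Then there is a constant $c$ with $\|e^{At}\|_{X\to X}\le ce^{\alpha t}$ for all $t\ge0$.
   Context: $\|\cdot\|_{\operatorname{Dom}(A)}$ denotes the graph norm of $A$. *)

(* Defs.v *)
From HB Require Import structures.
From mathcomp Require Import all_boot all_order all_algebra.
From mathcomp Require Import all_classical all_reals all_analysis.
Set Implicit Arguments. Unset Strict Implicit. Unset Printing Implicit Defensive.
Import Order.TTheory GRing.Theory Num.Theory.
Import numFieldNormedType.Exports.
Local Open Scope ring_scope.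
Local Open Scope classical_set_scope.

(* A strongly continuous (C_0) semigroup of bounded linear operators
   (T t)_{t >= 0} on the Banach space X (values of T at t < 0 are irrelevant). *)
Definition is_C0_semigroup (R : realType) (X : completeNormedModType R)
  (T : R -> X -> X) : Prop :=
  [/\ (forall t, 0 <= t -> forall (a : R) (x y : X),
          T t (a *: x + y) = a *: T t x + T t y),
      (forall t, 0 <= t -> continuous (T t)),
      (forall x, T 0 x = x),
      (forall s t, 0 <= s -> 0 <= t -> forall x, T (s + t) x = T s (T t x)) &
      (forall x, T t x @[t --> 0^'+] --> x)].

Definition sg_quot (R : realType) (X : completeNormedModType R)
  (T : R -> X -> X) (x : X) : R -> X := fun h => h^-1 *: (T h x - x).

Definition gen_dom (R : realType) (X : completeNormedModType R)
  (T : R -> X -> X) (x : X) : Prop := cvg (sg_quot T x @ 0^'+).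

Definition gen (R : realType) (X : completeNormedModType R)
  (T : R -> X -> X) (x : X) : X := lim (sg_quot T x @ 0^'+).

Definition graph_norm (R : realType) (X : completeNormedModType R)
  (T : R -> X -> X) (x : X) : R := `|x| + `|gen T x|.

(* Main.v *)
Require Import Defs.
From HB Require Import structures.
From mathcomp Require Import all_boot all_order all_algebra.
From mathcomp Require Import all_classical all_reals all_analysis.
From mathcomp Require Import ring lra.
Import Order.TTheory GRing.Theory Num.Theory.
Import numFieldNormedType.Exports.
Local Open Scope classical_set_scope.
Local Open Scope ring_scope.

Lemma near_right0_ex (R : realType) (P : R -> Prop) :
  (\forall h \near 0^'+, P h) -> exists2 d : R, 0 < d & forall h, 0 < h -> h < d -> P h.
Proof.
move=> H.
have [d d0 Hd] : exists2 d : R, 0 < d & forall h : R, `|h| < d -> 0 < h -> P h.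
  move: H; rewrite /at_right /within nearE => H.
  have := @nbhs_norm0P R R^o (fun h => 0 < h -> P h).
  move=> [+ _] => /(_ H).
  move=> [d d0 Hd]; exists d => // h hh; apply: Hd; rewrite /= sub0r normrN //.
by exists d => // h h0 hd; apply: Hd => //; rewrite gtr0_norm.
Qed.

Lemma near_right0_in (R : realType) (P : R -> Prop) (d : R) :
  0 < d -> (forall h, 0 < h -> h < d -> P h) -> \forall h \near 0^'+, P h.
Proof.
move=> d0 H; rewrite /at_right /within nearE.
have := @nbhs_norm0P R R^o (fun h => 0 < h -> P h).
move=> [_]; apply; exists d => //= h hd h0.
by apply: H => //; rewrite -(gtr0_norm h0).
Qed.

Lemma near_oo_ex (P : nat -> Prop) :
  (\forall n \near \oo, P n) -> exists N, forall n, (N <= n)%N -> P n.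
Proof. by move=> [N _ HN]; exists N => n hn; apply: HN. Qed.

Lemma near_oo_in (P : nat -> Prop) N :
  (forall n, (N <= n)%N -> P n) -> \forall n \near \oo, P n.
Proof. by move=> H; exists N. Qed.

Lemma l1 (V : zmodType) (A B a b : V) : A - a + b - B = A - B + (b - a).
Proof. by rewrite addrAC [A - a - B]addrAC -addrA [- a + b]addrC. Qed.

Lemma sum_shift (R : realType) (X : normedModType R) (F : nat -> X) (N m : nat) :
  \sum_(k < N) F (k + m)%N - \sum_(k < N) F k = \sum_(k < m) (F (k + N)%N - F k).
Proof.
elim: m => [|m IH].
  by rewrite big_ord0; under eq_bigr do rewrite addn0; rewrite subrr.
rewrite big_ord_recr /= -IH.
case: N {IH} => [|N]; first by rewrite !big_ord0 subrr add0r addn0 subrr.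
have -> : \sum_(k < N.+1) F (k + m.+1)%N = \sum_(k < N.+1) F (k + m)%N - F m + F (N.+1 + m)%N.
  rewrite big_ord_recr [in RHS]big_ord_recl /= add0n addnS.
  have -> : \sum_(i < N) F (i + m.+1)%N = \sum_(i < N) F (bump 0 i + m)%N.
    by apply: eq_bigr => i _; rewrite addnS.
  by rewrite addSn [F m + _]addrC addrK.
by rewrite addnC; apply: l1.
Qed.

Set Implicit Arguments. Unset Strict Implicit.


Definition islin (R : realType) (X : normedModType R) (f : X -> X) :=
  forall (a : R) (x y : X), f (a *: x + y) = a *: f x + f y.


Lemma lin0 (R : realType) (X : normedModType R) (f : X -> X) : islin f -> f 0 = 0.
Proof. by move=> lf; have := lf (-1) 0 0; rewrite scaler0 addr0 scaleN1r addNr. Qed.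

Lemma linD (R : realType) (X : normedModType R) (f : X -> X) : islin f ->
  forall x y, f (x + y) = f x + f y.
Proof. by move=> lf x y; rewrite -[x in LHS]scale1r lf scale1r. Qed.

Lemma linZ (R : realType) (X : normedModType R) (f : X -> X) : islin f ->
  forall a x, f (a *: x) = a *: f x.
Proof. by move=> lf a x; rewrite -[a *: x]addr0 lf (lin0 lf) addr0. Qed.

Lemma linB (R : realType) (X : normedModType R) (f : X -> X) : islin f ->
  forall x y, f (x - y) = f x - f y.
Proof.
move=> lf x y; rewrite addrC -scaleN1r lf scaleN1r addrC //.
Qed.

Lemma lin_sum (R : realType) (X : normedModType R) (f : X -> X) : islin f ->
  forall n (G : 'I_n -> X), f (\sum_(i < n) G i) = \sum_(i < n) f (G i).
Proof.
move=> lf n G; apply: (big_morph f (linD lf) (lin0 lf)).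
Qed.

Lemma sum_mul (R : realType) (X : normedModType R) (F : nat -> X) (N L : nat) :
  \sum_(j < N * L) F j = \sum_(k < N) \sum_(i < L) F (k * L + i)%N.
Proof.
elim: N => [|N IH]; first by rewrite mul0n !big_ord0.
rewrite mulSnr big_split_ord /= IH big_ord_recr /=.
by congr (_ + _); apply: eq_bigr => i _.
Qed.

Lemma lin_bound (R : realType) (X : normedModType R) (f : X -> X) : islin f ->
  continuous f -> exists C : R, 0 < C /\ forall x, `|f x| <= C * `|x|.
Proof.
move=> lf cf.
have := cf 0; rewrite /continuous_at (lin0 lf) => /cvgrPdist_lt /(_ 1 ltr01).
rewrite nearE => H.
have := @nbhs_norm0P R X (fun z => `|0 - f z| < 1).
move=> [+ _] => /(_ H) [d d0 Hd].
exists (2 / d); split; first by rewrite divr_gt0.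
move=> x; have [->|x0] := eqVneq x 0; first by rewrite (lin0 lf) !normr0 mulr0.
have nx0 : 0 < `|x| by rewrite normr_gt0.
have := Hd ((d / (2 * `|x|)) *: x).
rewrite /= normrZ ger0_norm; last by rewrite divr_ge0 // ?ltW // mulr_gt0.
rewrite invfM mulrA divfK ?gt_eqF // ltr_pdivrMr // ltr_pMr // ltr1n => /(_ isT).
rewrite sub0r normrN (linZ lf) normrZ ger0_norm; last by rewrite divr_ge0 // ?ltW // mulr_gt0.
move=> H1; rewrite -(@ler_pM2l _ (d / (2 * `|x|))) ?divr_gt0 ?mulr_gt0 //.
have E : d / (2 * `|x|) * (2 / d * `|x|) = 1.
  by field; rewrite ?gt_eqF.
rewrite E; apply: ltW; move: H1; by rewrite invfM mulrA.
Qed.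


Lemma sc_eps (R : realType) (X : normedModType R) (S : R -> X -> X) :
  (forall x, S 0 x = x) -> (forall x, S t x @[t --> 0^'+] --> x) ->
  forall x (e : R), 0 < e -> exists2 d : R, 0 < d &
    forall s, 0 <= s -> s < d -> `|S s x - x| <= e.
Proof.
move=> h0 hsc x e e0.
have /cvgrPdist_le /(_ e e0) /near_right0_ex [d d0 Hd] := hsc x.
exists d => // s; rewrite le_eqVlt => /orP [/eqP <- _|s0 sd].
  by rewrite h0 subrr normr0 ltW.
by rewrite distrC; apply: Hd.
Qed.

Lemma archi_inv (R : realType) (d : R) : 0 < d -> exists n : nat, n.+1%:R^-1 < d.
Proof.
move=> d0; exists (Num.trunc d^-1).
rewrite -[X in _ < X]invrK ltf_pV2 ?posrE ?invr_gt0 //; exact: truncnS_gt.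
Qed.

Lemma local_bound0 (R : realType) (X : completeNormedModType R) (T : R -> X -> X) :
  (forall t, 0 <= t -> islin (T t)) -> (forall t, 0 <= t -> continuous (T t)) ->
  (forall x, T 0 x = x) -> (forall x, T t x @[t --> 0^'+] --> x) ->
  exists n : nat, forall s, 0 <= s -> s <= n.+1%:R^-1 -> forall x,
    `|T s x| <= n.+1%:R * `|x|.
Proof.
move=> hl hc h0 hsc.
apply/not_existsP => Hn.
have : forall n : nat, exists p : R * X,
    [/\ 0 <= p.1, p.1 <= n.+1%:R^-1 & n.+1%:R * `|p.2| < `|T p.1 p.2|].
  move=> n; have /existsNP [s /not_implyP [s0 /not_implyP [sn /existsNP [x Hx]]]] := Hn n.
  by exists (s, x); split => //=; rewrite ltNge; apply/negP.
move=> /choice [g Hg].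
pose F := [set f : X -> X | exists n, f = T (g n).1].
have BS := @Banach_Steinhauss R X X F.
have [||M HM] := BS _ _ 1.
- move=> f [n ->]; have [s0 _ _] := Hg n; split; last exact: hl.
  have [C [C0 HC]] := lin_bound (hl _ s0) (hc _ s0).
  move=> r; exists (C * r) => x xr; apply: (le_trans (HC x)).
  by rewrite ler_pM2l.
- move=> x.
  have [d d0 Hd] := sc_eps h0 hsc x ltr01.
  have [N0 HN0] := archi_inv d0.
  exists (`|x| + 1 + \sum_(k < N0) `|T (g k).1 x|) => f [n ->].
  have [s0 sn _] := Hg n.
  have sumge0 : 0 <= \sum_(k < N0) `|T (g k).1 x| by apply: sumr_ge0.
  case: (ltnP n N0) => hn.
    rewrite (bigD1 (Ordinal hn)) //= addrCA lerDl.
    by rewrite addr_ge0 ?sumr_ge0 // addr_ge0.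
  have : `|T (g n).1 x - x| <= 1.
    apply: Hd => //; apply: (le_lt_trans sn); apply: le_lt_trans HN0.
    by rewrite lef_pV2 ?posrE // ler_nat.
  move=> H1; rewrite -addrA; apply: (@le_trans _ _ (`|x| + 1)); last first.
    by rewrite lerD2l lerDl.
  rewrite -[T _ x](subrK x) (le_trans (ler_normD _ _)) // addrC lerD2l.
  exact: H1.
- have [s0 sn Hlt] := Hg (Num.trunc M).
  set s := (g _).1 in s0 sn Hlt; set x := (g _).2 in Hlt.
  have x0 : x != 0.
    apply/negP => /eqP x0; move: Hlt; rewrite x0 (lin0 (hl _ s0)) !normr0 mulr0 ltxx //.
  have nx : 0 < `|x| by rewrite normr_gt0.
  have := HM (T s) (ex_intro _ _ erefl) (`|x|^-1 *: x).
  rewrite normrZ normfV normr_id mulVf ?gt_eqF // lexx => /(_ isT).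
  rewrite (linZ (hl _ s0)) normrZ normfV normr_id.
  rewrite ler_pdivrMl //; move=> H2.
  have : (Num.trunc M).+1%:R * `|x| < M * `|x|.
    by apply: lt_le_trans Hlt _; rewrite mulrC.
  rewrite ltr_pM2r // ltNge => /negP; apply.
  by apply: ltW; apply: truncnS_gt.
Qed.

Lemma local_bound (R : realType) (X : completeNormedModType R) (T : R -> X -> X) :
  (forall t, 0 <= t -> islin (T t)) -> (forall t, 0 <= t -> continuous (T t)) ->
  (forall x, T 0 x = x) ->
  (forall s t, 0 <= s -> 0 <= t -> forall x, T (s + t) x = T s (T t x)) ->
  (forall x, T t x @[t --> 0^'+] --> x) ->
  exists M : R, 1 <= M /\ forall s, 0 <= s -> s <= 2 -> forall x,
    `|T s x| <= M * `|x|.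
Proof.
move=> hl hc h0 hs hsc.
have [n Hn] := local_bound0 hl hc h0 hsc.
set d : R := n.+1%:R^-1 in Hn; set M0 : R := n.+1%:R in Hn.
have d0 : 0 < d by rewrite invr_gt0.
have M01 : 1 <= M0 by rewrite ler1n.
have K : forall k : nat, forall s, 0 <= s -> s <= k%:R * d -> forall x,
    `|T s x| <= M0 ^+ k * `|x|.
  elim => [|k IH] s s0 sk x.
    have -> : s = 0 by apply/eqP; rewrite eq_le s0 andbT; rewrite mul0r in sk.
    by rewrite h0 expr0 mul1r.
  have [sd|] := boolP (s <= d); last rewrite -ltNge => ds.
    apply: (le_trans (Hn _ s0 sd x)); rewrite ler_wpM2r //.
    by rewrite ler_eXnr.
  have -> : s = (s - d) + d by rewrite subrK.
  have s0' : 0 <= s - d by rewrite subr_ge0 ltW.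
  rewrite (hs _ _ s0' (ltW d0)).
  have sk' : s - d <= k%:R * d.
    by move: sk; rewrite -natr1 mulrDl mul1r lerBlDr.
  apply: (le_trans (IH _ s0' sk' _)).
  have M00 : 0 <= M0 by apply: le_trans M01.
  rewrite exprSr -mulrA ler_wpM2l ?exprn_ge0 //.
  exact: (Hn _ (ltW d0) (lexx _) x).
exists (M0 ^+ (2 * n.+1)); split; first exact: exprn_ege1.
move=> s s0 s2 x; apply: K => //.
apply: (le_trans s2); rewrite natrM /d -mulrA mulfV ?mulr1 //.
Qed.


Definition avg (R : realType) (X : normedModType R) (S : R -> X -> X) (N : nat) (x : X) : X :=
  N%:R^-1 *: \sum_(k < N) S (k%:R / N%:R) x.

Lemma norm_avg_le (R : realType) (X : normedModType R) (N : nat) (F : 'I_N -> X) (c : R) :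
  (0 < N)%N -> (forall k, `|F k| <= c) -> `|N%:R^-1 *: \sum_(k < N) F k| <= c.
Proof.
move=> N0 H; rewrite normrZ ger0_norm ?invr_ge0 //.
rewrite ler_pdivrMl ?ltr0n //; apply: (le_trans (ler_norm_sum _ _ _)).
apply: (le_trans (ler_sum _ (fun k _ => H k))).
by rewrite sumr_const card_ord mulr_natl.
Qed.

Lemma avg_cauchy (R : realType) (X : normedModType R) (S : R -> X -> X) (M : R) :
  0 <= M ->
  (forall t, 0 <= t -> islin (S t)) ->
  (forall s t, 0 <= s -> 0 <= t -> forall x, S (s + t) x = S s (S t x)) ->
  (forall s, 0 <= s -> s <= 2 -> forall x, `|S s x| <= M * `|x|) ->
  forall (N L : nat) x (e : R), (0 < N)%N -> (0 < L)%N ->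
  (forall s, 0 <= s -> s <= N%:R^-1 -> `|S s x - x| <= e) ->
  `|avg S (N * L) x - avg S N x| <= M * e.
Proof.
move=> M0 hl hs hB N L x e N0 L0 He.
have Nr : 0 < N%:R :> R by rewrite ltr0n.
have Lr : 0 < L%:R :> R by rewrite ltr0n.
pose u := L%:R^-1 *: \sum_(i < L) (S (i%:R / (N * L)%:R) x - x).
have kN : forall k : 'I_N, 0 <= k%:R / N%:R :> R by move=> k; rewrite divr_ge0.
have kN2 : forall k : 'I_N, k%:R / N%:R <= 2 :> R.
  move=> k; apply: (@le_trans _ _ 1); last by rewrite ler1n.
  by rewrite ler_pdivrMr // mul1r ler_nat ltnW.
have iNL : forall i : 'I_L, 0 <= i%:R / (N * L)%:R :> R by move=> i; rewrite divr_ge0.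
have E : avg S (N * L) x - avg S N x = N%:R^-1 *: \sum_(k < N) S (k%:R / N%:R) u.
  have Hk : forall k : 'I_N, S (k%:R / N%:R) u =
      L%:R^-1 *: \sum_(i < L) S ((k * L + i)%N%:R / (N * L)%:R) x - S (k%:R / N%:R) x.
    move=> k; rewrite /u (linZ (hl _ (kN k))) (lin_sum (hl _ (kN k))).
    under eq_bigr do rewrite (linB (hl _ (kN k))) -hs ?kN ?iNL //.
    rewrite sumrB sumr_const card_ord scalerBr -[S _ x *+ L]scaler_nat scalerA mulVf ?gt_eqF // scale1r.
    congr (_ *: _ - _); apply: eq_bigr => i _; congr (S _ x).
    rewrite natrD natrM !natrM; field; rewrite ?gt_eqF //.
  under [in RHS]eq_bigr do rewrite Hk.
  rewrite sumrB scalerBr /avg; congr (_ - _).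
  rewrite -scaler_sumr scalerA -invfM -natrM; congr (_ *: _).
  by rewrite (sum_mul (fun j => S (j%:R / (N * L)%:R) x)).
rewrite E; apply: norm_avg_le => // k.
apply: (le_trans (hB _ (kN k) (kN2 k) _)); rewrite ler_wpM2l //.
rewrite /u norm_avg_le // => i; apply: He => //.
rewrite ler_pdivrMr ?ltr0n ?muln_gt0 ?N0 // natrM mulrA mulVf ?gt_eqF // mul1r.
by rewrite ler_nat ltnW.
Qed.


Lemma norm_scale_sum_le (R : realType) (X : normedModType R) (m : nat) (G : 'I_m -> X) (a c : R) :
  0 <= a -> (forall k, `|G k| <= c) -> `|a *: \sum_(k < m) G k| <= a * (m%:R * c).
Proof.
move=> a0 H; rewrite normrZ ger0_norm // ler_wpM2l //.
apply: (le_trans (ler_norm_sum _ _ _)).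
apply: (le_trans (ler_sum _ (fun k _ => H k))).
by rewrite sumr_const card_ord mulr_natl.
Qed.

Lemma avg_shift (R : realType) (X : normedModType R) (S : R -> X -> X) (M : R) :
  0 <= M ->
  (forall t, 0 <= t -> islin (S t)) ->
  (forall s t, 0 <= s -> 0 <= t -> forall x, S (s + t) x = S s (S t x)) ->
  (forall s, 0 <= s -> s <= 2 -> forall x, `|S s x| <= M * `|x|) ->
  forall (N m : nat) x (h e1 e2 : R), (0 < N)%N -> 0 < h -> h <= 1 ->
  m%:R <= h * N%:R -> h * N%:R < m.+1%:R ->
  `|S (h - m%:R / N%:R) x - x| <= e1 ->
  (forall s, 0 <= s -> s <= h -> `|S s (S 1 x - x) - (S 1 x - x)| <= e2) ->
  `|S h (avg S N x) - avg S N x - h *: (S 1 x - x)|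
     <= M * e1 + h * e2 + `|S 1 x - x| / N%:R.
Proof.
move=> M0 hl hs hB N m x h e1 e2 N0 h0 h1 mh hm He1 He2.
have Nr : 0 < N%:R :> R by rewrite ltr0n.
have mNh : m%:R / N%:R <= h by rewrite ler_pdivrMr.
have mN : (m <= N)%N.
  rewrite -(ler_nat R); apply: (le_trans mh).
  by rewrite ler_piMl // ltW.
set w := S 1 x - x in He2 *.
set r := h - m%:R / N%:R.
have r0 : 0 <= r by rewrite subr_ge0.
have rN : r <= N%:R^-1.
  rewrite /r lerBlDr.
  have -> : N%:R^-1 + m%:R / N%:R = m.+1%:R / N%:R :> R.
    by rewrite -natr1 mulrDl mul1r addrC.
  rewrite ler_pdivlMr //.
  by rewrite ltW.
have kN : forall k : nat, 0 <= k%:R / N%:R :> R by move=> k; rewrite divr_ge0.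
have E : S h (avg S N x) - avg S N x =
    N%:R^-1 *: \sum_(k < N) S ((k + m)%N%:R / N%:R) (S r x - x) +
    N%:R^-1 *: \sum_(k < m) S (k%:R / N%:R) w.
  rewrite /avg (linZ (hl _ (ltW h0))) (lin_sum (hl _ (ltW h0))).
  have Hk : forall k : 'I_N, S h (S (k%:R / N%:R) x) =
      S ((k + m)%N%:R / N%:R) (S r x - x) + S ((k + m)%N%:R / N%:R) x.
    move=> k; rewrite -hs ?(ltW h0) //.
    rewrite (linB (hl _ (kN _))) -hs // subrK; congr (S _ x).
    rewrite /r natrD; field; rewrite ?gt_eqF //.
  under eq_bigr do rewrite Hk.
  rewrite big_split /= scalerDr -addrA; congr (_ + _).
  rewrite -scalerBr; congr (_ *: _).
  rewrite (@sum_shift _ _ (fun j => S (j%:R / N%:R) x)).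
  apply: eq_bigr => k _; rewrite /w (linB (hl _ (kN _))) -hs //; congr (S _ x - _).
  rewrite natrD; field; rewrite ?gt_eqF //.
rewrite E -addrA (le_trans (ler_normD _ _)) // -addrA lerD //.
  apply: norm_avg_le => // k.
  apply: (le_trans (hB _ (kN _) _ _)); last by rewrite ler_wpM2l.
  rewrite ler_pdivrMr //.
  have : ((k + m)%N <= 2 * N)%N by rewrite mul2n -addnn leq_add // ltnW.
  by rewrite -(ler_nat R) natrM.
clearbody w.
have E2 : N%:R^-1 *: \sum_(k < m) S (k%:R / N%:R) w - h *: w =
    N%:R^-1 *: \sum_(k < m) (S (k%:R / N%:R) w - w) - r *: w.
  rewrite sumrB sumr_const card_ord scalerBr /r scalerBl -[w *+ m]scaler_nat scalerA [N%:R^-1 * _]mulrC.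
  by rewrite opprB addrA subrK.
rewrite E2 (le_trans (ler_normB _ _)) // lerD //.
  have e20 : 0 <= e2 := le_trans (normr_ge0 _) (He2 0 (lexx 0) (ltW h0)).
  apply: (@le_trans _ _ (N%:R^-1 * (m%:R * e2))).
    apply: norm_scale_sum_le; first by rewrite invr_ge0 ltW.
    move=> k; apply: He2 => //; apply: le_trans mNh.
    by rewrite ler_pM2r ?invr_gt0 // ler_nat ltnW.
  by rewrite mulrA ler_wpM2r // mulrC.
rewrite normrZ ger0_norm // mulrC ler_wpM2l //.
Qed.


Lemma l3 (V : zmodType) (A B a b c : V) : A - a - c = (A - B - (a - b)) + (B - b - c).
Proof.
rewrite addrA; congr (_ - _).
by rewrite opprB addrCA addrA [B + _]addrA subrKC addrAC addrA subrK.
Qed.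

Lemma pow2_inv (R : realType) (d : R) : 0 < d ->
  exists n, forall j, (n <= j)%N -> (2 ^ j)%N%:R^-1 < d.
Proof.
move=> d0; have [n Hn] := archi_inv d0; exists n => j nj.
apply: le_lt_trans Hn; rewrite lef_pV2 ?posrE ?ltr0n ?expn_gt0 // ler_nat.
by apply: leq_ltn_trans nj _; apply: ltn_expl.
Qed.

Lemma integral_dom (R : realType) (X : completeNormedModType R) (S : R -> X -> X) (M : R) :
  0 <= M ->
  (forall t, 0 <= t -> islin (S t)) ->
  (forall x, S 0 x = x) ->
  (forall s t, 0 <= s -> 0 <= t -> forall x, S (s + t) x = S s (S t x)) ->
  (forall x, S t x @[t --> 0^'+] --> x) ->
  (forall s, 0 <= s -> s <= 2 -> forall x, `|S s x| <= M * `|x|) ->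
  forall x, exists y, (fun h => h^-1 *: (S h y - y)) @ 0^'+ --> S 1 x - x.
Proof.
move=> M0 hl h0 hs hsc hB x.
have M1 : 0 < M + 1 by rewrite ltr_wpDl.
pose z j := avg S (2 ^ j)%N x.
have Cz : cvg (z @ \oo).
  apply: cauchy_cvg; apply: cauchy_exP => eps eps0.
  have e0 : 0 < eps / (M + 1) by rewrite divr_gt0.
  have [d d0 Hd] := sc_eps h0 hsc x e0.
  have [n Hn] := pow2_inv d0.
  exists (z n); apply: (@near_oo_in _ n) => j nj.
  rewrite -ball_normE /ball_ /= distrC /z -(subnKC nj) expnD.
  apply: le_lt_trans (avg_cauchy M0 hl hs hB _ _ _) _.
  - by rewrite expn_gt0.
  - by rewrite expn_gt0.
  - move=> s s0 sn; apply: Hd => //; apply: le_lt_trans sn _; exact: Hn.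
  - by rewrite mulrA ltr_pdivrMr // mulrDr mulr1 [M * _]mulrC ltrDl.
exists (lim (z @ \oo)); set y := lim _.
set w := S 1 x - x.
apply/cvgrPdist_le => eps eps0.
have [d2 d20 Hd2] := sc_eps h0 hsc w eps0.
apply: (@near_right0_in _ _ (Num.min d2 1)); first by rewrite lt_min d20 ltr01.
move=> h h0' hd; move: hd; rewrite lt_min => /andP [hd2 h1].
have key : `|S h y - y - h *: w| <= h * eps.
  apply/ler_addgt0Pr => eta eta0.
  have eta3 : 0 < eta / 3 by rewrite divr_gt0.
  have e1p : 0 < eta / 3 / (M + 1) by rewrite divr_gt0.
  have [d1 d10 Hd1] := sc_eps h0 hsc x e1p.
  have [n1 Hn1] := pow2_inv d10.
  have wp : 0 < eta / 3 / (`|w| + 1) by rewrite divr_gt0 // ltr_pwDr.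
  have [n2 Hn2] := pow2_inv wp.
  have /cvgrPdist_le /(_ _ e1p) /near_oo_ex [n3 Hn3] := Cz.
  set j := maxn n1 (maxn n2 n3).
  have Hz := Hn3 j (leq_trans (leq_maxr _ _) (leq_maxr _ _)).
  have H1 := Hn1 j (leq_maxl _ _).
  have H2 := Hn2 j (leq_trans (leq_maxl _ _) (leq_maxr _ _)).
  set N := (2 ^ j)%N in H1 H2.
  have N0 : (0 < N)%N by rewrite expn_gt0.
  have Nr : 0 < N%:R :> R by rewrite ltr0n.
  set m := Num.truncn (h * N%:R).
  have /andP [mh hm] := truncn_itv (mulr_ge0 (ltW h0') (ltW Nr)).
  have Hsh := avg_shift M0 hl hs hB (x := x) (e1 := eta / 3 / (M + 1)) (e2 := eps) N0 h0' (ltW h1) mh hm.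
  have He1 : `|S (h - m%:R / N%:R) x - x| <= eta / 3 / (M + 1).
    apply: Hd1; first by rewrite subr_ge0 ler_pdivrMr.
    apply: lt_trans H1.
    rewrite ltrBlDr.
    have -> : N%:R^-1 + m%:R / N%:R = m.+1%:R / N%:R :> R.
      by rewrite -natr1 mulrDl mul1r addrC.
    by rewrite ltr_pdivlMr.
  have He2 : forall s, 0 <= s -> s <= h -> `|S s w - w| <= eps.
    by move=> s s0 sh; apply: Hd2 => //; apply: le_lt_trans hd2.
  have Hs := Hsh He1 He2.
  have zj : z j = avg S N x by [].
  rewrite -zj -/w in Hs.
  have -> : S h y - y - h *: w = (S h (y - z j) - (y - z j)) + (S h (z j) - z j - h *: w).
    rewrite (linB (hl _ (ltW h0'))).
    exact: l3.
  set a := `|y - z j| in Hz *.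
  have Ha : `|S h (y - z j)| <= M * a.
    apply: hB; [exact: ltW h0' | apply: (le_trans (ltW h1)); rewrite ler1n //].
  have F1 : M * a + a <= eta / 3.
    have : (M + 1) * a <= eta / 3.
      by rewrite -ler_pdivlMl // mulrC.
    by rewrite mulrDl mul1r.
  have F2 : M * (eta / 3 / (M + 1)) <= eta / 3.
    by rewrite mulrA ler_pdivrMr // mulrDr mulr1 [M * _]mulrC lerDl ltW.
  have F3 : `|w| / N%:R <= eta / 3.
    move: H2; rewrite ltr_pdivlMr ?ltr_pwDr // => H2'.
    apply: le_trans (ltW H2'); rewrite mulrC ler_wpM2l ?lerDl // invr_ge0; exact: ltW.
  apply: (le_trans (ler_normD _ _)).
  apply: (@le_trans _ _ (M * a + a + (M * (eta / 3 / (M + 1)) + h * eps + `|w| / N%:R))).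
    apply: lerD => //; apply: (le_trans (ler_normB _ _)); exact: lerD.
  lra.
have -> : w - h^-1 *: (S h y - y) = - (h^-1 *: (S h y - y - h *: w)).
  by rewrite [in RHS]scalerBr scalerA mulVf ?gt_eqF // scale1r opprB.
have hi : 0 <= h^-1 by rewrite invr_ge0; exact: ltW h0'.
rewrite normrN normrZ ger0_norm //.
apply: (le_trans (ler_wpM2l hi key)).
by rewrite mulKf ?gt_eqF.
Qed.


Lemma expR_small (R : realType) (u : R) : 0 <= u -> u <= 1/2 ->
  u <= expR u - 1 <= u + 2 * u ^+ 2.
Proof.
move=> u0 u1.
have E1 := expR_ge1Dx u.
have E2 := expR_ge1Dx (- u).
have E3 : expR u * expR (- u) = 1 by rewrite -expRD subrr expR0.
have Ep := expR_gt0 u.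
have Enp := expR_gt0 (- u).
set E := expR u in E1 E3 Ep *; set F := expR (- u) in E2 E3 Enp.
apply/andP; split; first lra.
have H : E * (1 - u) <= 1.
  rewrite -[leRHS]E3 ler_wpM2l ?(ltW Ep) //; lra.
nra.
Qed.

Lemma lim_exp1 (R : realType) (l : R) : 0 < l ->
  expR (l * h) @[h --> 0^'+] --> (1 : R).
Proof.
move=> l0; apply/cvgrPdist_le => e e0.
apply: (@near_right0_in _ _ (Num.min (e / (2 * l)) (1 / (2 * l)))).
  by rewrite lt_min !divr_gt0 ?mulr_gt0.
move=> h h0; rewrite lt_min => /andP [he h1].
have u0 : 0 <= l * h by rewrite mulr_ge0 ?ltW.
have u1 : l * h <= 1 / 2.
  by move: h1; rewrite ltr_pdivlMr ?mulr_gt0 // => h2; apply/ltW; rewrite mulrC; lra.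
have /andP [A B] := expR_small u0 u1.
have ue : l * h <= e / 2.
  by move: he; rewrite ltr_pdivlMr ?mulr_gt0 // => h2; apply/ltW; rewrite mulrC; lra.
rewrite distrC ger0_norm; last lra.
nra.
Qed.

Lemma lim_expq (R : realType) (l : R) : 0 < l ->
  h^-1 * (expR (l * h) - 1) @[h --> 0^'+] --> l.
Proof.
move=> l0; apply/cvgrPdist_le => e e0.
apply: (@near_right0_in _ _ (Num.min (e / (2 * l ^+ 2)) (1 / (2 * l)))).
  by rewrite lt_min !divr_gt0 ?mulr_gt0 ?exprn_gt0.
move=> h h0; rewrite lt_min => /andP [he h1].
have u0 : 0 <= l * h by rewrite mulr_ge0 ?ltW.
have u1 : l * h <= 1 / 2.
  by move: h1; rewrite ltr_pdivlMr ?mulr_gt0 // => h2; apply/ltW; rewrite mulrC; lra.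
have /andP [A B] := expR_small u0 u1.
have he' : h * (2 * l ^+ 2) <= e.
  by move: he; rewrite ltr_pdivlMr ?mulr_gt0 ?exprn_gt0 // => h2; apply/ltW.
have hq : h * h^-1 = 1 by rewrite mulfV ?gt_eqF.
set q := h^-1 in hq *.
set D := expR (l * h) - 1 in A B *.
clearbody D.
have Dq : D * q = l + (D - l * h) * q by rewrite mulrBl -mulrA hq mulr1 addrC subrK.
have q0 : 0 < q by rewrite /q invr_gt0.
have X1 : 0 <= (D - l * h) * q by apply: mulr_ge0; lra.
have X2 : (D - l * h) * q <= 2 * l ^+ 2 * h.
  have hh : 2 * (l * h) ^+ 2 * q = 2 * l ^+ 2 * h.
    by rewrite /q; field; rewrite gt_eqF.
  rewrite -hh ler_wpM2r ?(ltW q0) //; lra.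
rewrite [q * D]mulrC Dq ler_norml; apply/andP; split; first lra.
lra.
Qed.

Lemma lim_expN (R : realType) (l : R) : 0 < l ->
  expR (- (l * h)) @[h --> 0^'+] --> (1 : R).
Proof.
move=> l0; apply/cvgrPdist_le => e e0.
apply: (@near_right0_in _ _ (e / l)); first by rewrite divr_gt0.
move=> h h0 he.
have A := expR_ge1Dx (- (l * h)).
have B : expR (- (l * h)) <= 1 by rewrite expR_le1 oppr_le0 mulr_ge0 // ltW.
have C : l * h <= e by move: he; rewrite ltr_pdivlMr // mulrC => /ltW.
rewrite ger0_norm; lra.
Qed.


Lemma l4 (V : zmodType) (x a b : V) : x = a + b - (a - x + b).
Proof. by rewrite [a - x + b]addrC opprD addrA addrK opprB addrC subrK. Qed.

Unset Implicit Arguments. Set Strict Implicit.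

Theorem lemma4p11 (R : realType) (X : completeNormedModType R)
  (T : R -> X -> X) (alpha : R) :
  is_C0_semigroup T ->
  (forall x : X, gen_dom T x ->
     exists c_x : R, forall t : R, 0 <= t ->
       graph_norm T (T t x) <= c_x * expR (alpha * t)) ->
  exists c : R, forall t : R, 0 <= t ->
    forall x : X, `|T t x| <= c * expR (alpha * t) * `|x|.
Proof.
move=> [hl hc h0 hs hsc] Hyp.
have hl' : forall t, 0 <= t -> islin (T t) := hl.
have [M [M1 HM]] := local_bound hl' hc h0 hs hsc.
have M0 : 0 < M by apply: lt_le_trans M1.
set lam := 2 * M.
have lam0 : 0 < lam by rewrite mulr_gt0.
have Hq : expR (- lam) * M <= 1 / 2.
  rewrite expRN mulrC ler_pdivrMr ?expR_gt0 //.
  have := expR_ge1Dx lam; rewrite /lam; lra.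
pose S t x := expR (- (lam * t)) *: T t x.
have hlS : forall t, 0 <= t -> islin (S t).
  move=> t t0 a x y; rewrite /S hl // scalerDr !scalerA mulrC //.
have h0S : forall x, S 0 x = x by move=> x; rewrite /S mulr0 oppr0 expR0 scale1r h0.
have hsS : forall s t, 0 <= s -> 0 <= t -> forall x, S (s + t) x = S s (S t x).
  by move=> s t s0 t0 x; rewrite /S (linZ (hl' _ s0)) hs // scalerA -expRD mulrDr opprD.
have hscS : forall x, S t x @[t --> 0^'+] --> x.
  move=> z; have H := cvgZ (lim_expN lam0) (hsc z); rewrite scale1r in H; exact: H.
have hBS : forall s, 0 <= s -> s <= 2 -> forall x, `|S s x| <= M * `|x|.
  move=> s s0 s2 x; rewrite /S normrZ ger0_norm ?expR_ge0 //.
  have : expR (- (lam * s)) <= 1 by rewrite expR_le1 oppr_le0 mulr_ge0 // ltW.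
  move=> e1; apply: (le_trans _ (HM _ s0 s2 x)).
  by rewrite -[leRHS]mul1r ler_wpM2r.
have PW : forall x, exists K : R, forall t, 0 <= t -> `|T t x| <= K * expR (alpha * t).
  move=> x.
  have FF : ProperFilter ((0:R)^'+) by apply: at_right_proper_filter.
  have [y Hy] := integral_dom (ltW M0) hlS h0S hsS hscS hBS x.
  set v := S 1 x - x + lam *: y.
  have HqT : sg_quot T y @ 0^'+ --> v.
    have E : forall h, 0 < h -> sg_quot T y h =
        expR (lam * h) *: (h^-1 *: (S h y - y)) + (h^-1 * (expR (lam * h) - 1)) *: y.
      move=> h h0'; rewrite /sg_quot /S.
      rewrite scalerBr scalerA scalerBr !scalerA mulrBr mulr1 scalerBl.
      rewrite [expR (lam * h) / h * _]mulrAC -expRD subrr expR0 mul1r.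
      by rewrite [expR _ / h]mulrC addrA subrK.
    have L := @cvgD R X R 0^'+ _ _ _ _ _ (cvgZ (lim_exp1 lam0) Hy) (cvgZ (lim_expq lam0) (cvg_cst y)).
    rewrite scale1r in L.
    have {}L := L FF FF FF FF.
    apply: (cvg_trans _ L); apply: near_eq_cvg.
    by apply: (@near_right0_in _ _ 1) => // h h0' _; rewrite E.
  have Dy : gen_dom T y by apply: cvgP HqT.
  have Gy : gen T y = v by rewrite /gen (cvg_lim (@norm_hausdorff R X) HqT).
  have [c Hc] := Hyp y Dy.
  have comm : forall t, 0 <= t -> gen T (T t y) = T t v.
    move=> t t0; rewrite /gen; apply: (cvg_lim (@norm_hausdorff R X)).
    have L := continuous_cvg FF (hc _ t0 v) HqT.
    apply: (cvg_trans _ L); apply: near_eq_cvg.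
    apply: (@near_right0_in _ _ 1) => // h h0' _ /=.
    rewrite /sg_quot (linZ (hl' _ t0)) (linB (hl' _ t0)).
    by rewrite -(hs _ _ t0 (ltW h0')) [t + h]addrC (hs _ _ (ltW h0') t0).
  exists (2 * (lam + 1) * c) => t t0.
  have ex : x = S 1 x + lam *: y - v by rewrite /v; apply: l4.
  have Tx : T t x = expR (- lam) *: T 1 (T t x) + lam *: T t y - gen T (T t y).
    rewrite comm // {1}ex (linB (hl' _ t0)) (linD (hl' _ t0)) (linZ (hl' _ t0)).
    rewrite /S mulr1 (linZ (hl' _ t0)) -(hs _ _ t0 ler01) [t + 1]addrC (hs _ _ ler01 t0).
    by [].
  have Hct := Hc t t0; rewrite /graph_norm in Hct.
  set n := `|T t x|; set a := `|T t y|; set g := `|gen T (T t y)|.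
  set E := expR (alpha * t) in Hct *.
  have n1 : `|expR (- lam) *: T 1 (T t x)| <= n / 2.
    rewrite normrZ ger0_norm ?expR_ge0 //.
    apply: (@le_trans _ _ (expR (- lam) * (M * n))).
      by rewrite ler_wpM2l ?expR_ge0 //; apply: HM => //; rewrite ler1n.
    rewrite mulrA; apply: le_trans (ler_wpM2r (normr_ge0 _) Hq) _.
    by rewrite /n; lra.
  have n2 : n <= n / 2 + lam * a + g.
    rewrite {1}/n Tx (le_trans (ler_normB _ _)) // lerD2r.
    apply: (le_trans (ler_normD _ _)); apply: lerD => //.
    by rewrite normrZ ger0_norm // ltW.
  have a0 : 0 <= a := normr_ge0 _.
  have g0 : 0 <= g := normr_ge0 _.
  have H3 : (lam + 1) * (a + g) <= (lam + 1) * (c * E).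
    by rewrite ler_wpM2l // addr_ge0 // ltW.
  have H4 : 0 <= lam * g by rewrite mulr_ge0 // ltW.
  lra.
pose F := [set f : X -> X | exists2 t, 0 <= t & f = (fun z => expR (- (alpha * t)) *: T t z)].
have [||K HK] := @Banach_Steinhauss R X X F _ _ 1.
- move=> f [t t0 ->]; split.
    have [C [C0 HC]] := lin_bound (hl' _ t0) (hc _ t0).
    move=> r; exists (expR (- (alpha * t)) * (C * r)) => z zr.
    rewrite normrZ ger0_norm ?expR_ge0 // ler_wpM2l ?expR_ge0 //.
    apply: (le_trans (HC z)); apply: ler_wpM2l => //; exact: ltW.
  by move=> a u w; rewrite hl // scalerDr !scalerA mulrC.
- move=> z; have [K HK] := PW z; exists K => f [t t0 ->].
  rewrite normrZ ger0_norm ?expR_ge0 // expRN mulrC ler_pdivrMr ?expR_gt0 //.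
  exact: HK.
- exists K => t t0 z.
  have [->|z0] := eqVneq z 0; first by rewrite (lin0 (hl' _ t0)) !normr0 mulr0.
  have nz : 0 < `|z| by rewrite normr_gt0.
  have := HK _ (ex_intro2 _ _ t t0 erefl) (`|z|^-1 *: z).
  rewrite normrZ normfV normr_id mulVf ?gt_eqF // lexx => /(_ isT).
  rewrite (linZ (hl' _ t0)) scalerA normrZ ger0_norm; last first.
    by rewrite mulr_ge0 ?expR_ge0 // invr_ge0 ltW.
  rewrite expRN -invfM mulrC ler_pdivrMr ?mulr_gt0 ?expR_gt0 //.
  by rewrite mulrA.
Qed.
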